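(* Under the hypotheses of the setting below, the functions $\Phi=\varphi\Delta^{-1}=W\{\varphi\}C^{-1}$ and $\Psi=\psi(\Delta^{-1})^\top=(W^{-1})^\tau\{\psi\}(C^\top)^{-1}$ satisfy $$\hat L_{k,l}\{\Phi\}+c_l(\hat M_n)^{l+1}\{\Phi\}=0,\qquad \hat L_{k,l}^\tau\{\Psi\}+c_l(\hat M_n^\tau)^{l+1}\{\Psi\}=0,$$ where $\hat L_{k,l}=WL_{k,l}W^{-1}$ and $\hat M_n=WM_nW^{-1}$.
   Context: $D=\partial/\partial x$. Operators are formal matrix pseudodifferential operators in $D$ whose coefficients are $N\times N$ matrix functions of $x$ and $t_n$; they may also contain $\partial_{t_n}$, which commutes with $D$. $P\{f\}$ is the action on $f$, with $D^{-1}$ a fixed $x$-antiderivative commuting with $\partial_{t_n}$. The formal transpose $P^\tau$ is the anti-automorphism with $(fD^i)^\tau=(-1)^iD^if^\top$, $\partial_{t_n}^\tau=-\partial_{t_n}$, $(PQ)^\tau=Q^\tau P^\tau$. Setting. Data: $k,n\in\mathbb N$; $l\ge0$; $c_l,\alpha_n\in\mathbb C$; $\mathcal J_k,\tilde{\mathcal J}_n$ commuting constant $N\times N$ matrices; $u_j,v_i$ are $N\times N$ matrix functions; $\mathbf q,\mathbf r$ are $N\times m$ matrix functions; $\mathcal M_0$ is a constant $m\times m$ matrix. Operators: $$M_n=\alpha_n\partial_{t_n}-\tilde{\mathcal J}_nD^n-\sum_{i=0}^{n-1}v_iD^i-\mathbf q\mathcal M_0D^{-1}\mathbf r^\top,$$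 $$L_{k,l}=\mathcal J_kD^k+\sum_{j=0}^{k-1}u_jD^j+c_l\sum_{j=0}^l\mathbf q[j]\mathcal M_0D^{-1}\mathbf r^\top[l-j],$$ with $\mathbf q[j]=M_n^j\{\mathbf q\}$ and $\mathbf r^\top[j]=((M_n^\tau)^j\{\mathbf r\})^\top$. Hypotheses: $N\times K$ matrix functions $\varphi,\psi$ satisfy $M_n\{\varphi\}=\varphi\Lambda$, $M_n^\tau\{\psi\}=\psi\tilde\Lambda$, $L_{k,l}\{\varphi\}=-c_l\varphi\Lambda^{l+1}$ and $L^\tau_{k,l}\{\psi\}=-c_l\psi\tilde\Lambda^{l+1}$, where $\Lambda,\tilde\Lambda$ are constant $K\times K$ matrices. $C$ is a constant invertible $K\times K$ matrix, $\Delta=C+D^{-1}\{\psi^\top\varphi\}$, $W=I-\varphi\Delta^{-1}D^{-1}\psi^\top$, and $W^{-1}=I+\varphi D^{-1}\Delta^{-1}\psi^\top$.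
   Formalization: The fixed x-antiderivative $D^{-1}$ is a base-point one: f ↦ f − $D^{-1}${Df} is multiplicative on scalar functions, as for the integral from x₀ to x. The statement above fails without it. *)

(* Defs.v *)
From HB Require Import structures.
From mathcomp Require Import all_boot all_order all_algebra.
Set Implicit Arguments. Unset Strict Implicit. Unset Printing Implicit Defensive.
Import GRing.Theory.
Local Open Scope ring_scope.

Section Ops.
Variables (F : fieldType) (A : comUnitAlgType F).

(* Syntax of (matrix) operators in D, D^{-1}, d/dt_n.
   [op a b] maps matrix functions with a rows to matrix functions with b rows
   (any number of columns). *)
Inductive op : nat -> nat -> Type :=
| OMul a b : 'M[A]_(b, a) -> op a b
| ODx a : op a a
| ODinv a : op a a
| ODt a : op a a
| OScale a b : F -> op a b -> op a b
| OAdd a b : op a b -> op a b -> op a b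
| OComp a b c : op b c -> op a b -> op a c.   (* P Q  (Q acts first) *)

Fixpoint otr a b (P : op a b) : op b a :=
  match P in op a b return op b a with
  | OMul _ _ f => OMul f^T
  | ODx a => OScale (-1) (ODx a)
  | ODinv a => OScale (-1) (ODinv a)
  | ODt a => OScale (-1) (ODt a)
  | OScale _ _ c P => OScale c (otr P)
  | OAdd _ _ P Q => OAdd (otr P) (otr Q)
  | OComp _ _ _ P Q => OComp (otr Q) (otr P)
  end.

Definition oid a : op a a := OMul (1%:M).
Definition ozero a b : op a b := OMul 0.
Definition osub a b (P Q : op a b) : op a b := OAdd P (OScale (-1) Q).
Fixpoint opow a (P : op a a) (j : nat) : op a a :=
  if j is j'.+1 then OComp P (opow P j') else oid a.
Fixpoint osum a b (n : nat) (G : nat -> op a b) : op a b :=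
  if n is n'.+1 then OAdd (osum n' G) (G n') else ozero a b.

Variables (Dx Dt Dinv : A -> A).

Fixpoint act a b (P : op a b) (p : nat) : 'M[A]_(a, p) -> 'M[A]_(b, p) :=
  match P in op a b return 'M[A]_(a, p) -> 'M[A]_(b, p) with
  | OMul _ _ f => fun g => f *m g
  | ODx _ => fun g => map_mx Dx g
  | ODinv _ => fun g => map_mx Dinv g
  | ODt _ => fun g => map_mx Dt g
  | OScale _ _ c P => fun g => c%:A *: act P g
  | OAdd _ _ P Q => fun g => act P g + act Q g
  | OComp _ _ _ P Q => fun g => act P (act Q g)
  end.

End Ops.

(* constant matrices (entries in the field of constants F) as matrix functions *)
Definition cst (F : fieldType) (A : comUnitAlgType F) m n (X : 'M[F]_(m, n))
  : 'M[A]_(m, n) := map_mx (fun c => c%:A) X.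

(* The "base-point evaluation" attached to the antiderivative:
   ev f = f - D^{-1}{D f}  (for D^{-1} = int_{x0}^x this is f|_{x=x0}). *)
Definition evx (F : fieldType) (A : comUnitAlgType F) (Dx Dinv : A -> A) (f : A) : A :=
  f - Dinv (Dx f).

Definition Mop (F : fieldType) (A : comUnitAlgType F) (N m n : nat)
  (alpha : F) (Jt : 'M[F]_N) (v : nat -> 'M[A]_N) (q r : 'M[A]_(N, m))
  (M0 : 'M[F]_m) : op A N N :=
  osub (osub (osub (OScale alpha (ODt A N))
                   (OComp (OMul (cst A Jt)) (opow (ODx A N) n)))
             (osum n (fun i => OComp (OMul (v i)) (opow (ODx A N) i))))
       (OComp (OMul (q *m cst A M0)) (OComp (ODinv A m) (OMul r^T))).

(* The operator L_{k,l}, with q[j] = M^j{q}, r^T[j] = ((M^t)^j{r})^T *)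
Definition Lop (F : fieldType) (A : comUnitAlgType F) (Dx Dt Dinv : A -> A)
  (N m k l : nat) (c : F) (J : 'M[F]_N) (u : nat -> 'M[A]_N)
  (q r : 'M[A]_(N, m)) (M0 : 'M[F]_m) (M : op A N N) : op A N N :=
  OAdd (OAdd (OComp (OMul (cst A J)) (opow (ODx A N) k))
             (osum k (fun j => OComp (OMul (u j)) (opow (ODx A N) j))))
       (OScale c (osum l.+1 (fun j =>
          OComp (OMul (act Dx Dt Dinv (opow M j) q *m cst A M0))
            (OComp (ODinv A m)
               (OMul (act Dx Dt Dinv (opow (otr M) (l - j)%N) r)^T))))).

Definition Wop (F : fieldType) (A : comUnitAlgType F) (N K : nat)
  (phi psi : 'M[A]_(N, K)) (Delta : 'M[A]_K) : op A N N :=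
  osub (oid A N) (OComp (OMul (phi *m invmx Delta)) (OComp (ODinv A K) (OMul psi^T))).

Definition Winvop (F : fieldType) (A : comUnitAlgType F) (N K : nat)
  (phi psi : 'M[A]_(N, K)) (Delta : 'M[A]_K) : op A N N :=
  OAdd (oid A N) (OComp (OMul phi) (OComp (ODinv A K) (OMul (invmx Delta *m psi^T)))).

(* Main.v *)
Require Import Defs.
From HB Require Import structures.
From mathcomp Require Import all_boot all_order all_algebra.
Import GRing.Theory.
Local Open Scope ring_scope.

Section Aux.
Variables (F : fieldType) (A : comUnitAlgType F).
Implicit Types f : A -> A.

Definition islin f := forall (a:F) x y, f (a *: x + y) = a *: f x + f y.

Lemma lin0 f : islin f -> f 0 = 0.
Proof.
move=> h; have := h 1 0 0; rewrite !scale1r !addr0 => e.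
by apply: (addrI (f 0)); rewrite addr0 -e.
Qed.

Lemma linD f : islin f -> forall x y, f (x + y) = f x + f y.
Proof. by move=> h x y; rewrite -{1}[x]scale1r h scale1r. Qed.

Lemma linZ f : islin f -> forall a x, f (a *: x) = a *: f x.
Proof. by move=> h a x; rewrite -[a *: x]addr0 h lin0 // addr0. Qed.

Lemma linN f : islin f -> forall x, f (- x) = - f x.
Proof. by move=> h x; rewrite -scaleN1r linZ // scaleN1r. Qed.

Lemma lin_sum f (h : islin f) I (r : seq I) (P : pred I) (G : I -> A) :
  f (\sum_(i <- r | P i) G i) = \sum_(i <- r | P i) f (G i).
Proof. by apply: big_morph; [exact: linD | exact: lin0]. Qed.

Lemma linMc f : islin f -> forall x (c : F), f (x * c%:A) = f x * c%:A.
Proof. by move=> h x c; rewrite !mulr_algr linZ. Qed.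

Lemma map_mx_mulc f : islin f -> forall m n p (g : 'M[A]_(m,n)) (X : 'M[F]_(n,p)),
  map_mx f (g *m cst A X) = map_mx f g *m cst A X.
Proof.
move=> h m n p g X; apply/matrixP=> i j; rewrite !mxE lin_sum //.
by apply: eq_bigr=> k _; rewrite /cst !mxE linMc.
Qed.

Lemma cstM m n p (X : 'M[F]_(m,n)) (Y : 'M[F]_(n,p)) :
  cst A (X *m Y) = cst A X *m cst A Y.
Proof. exact: (map_mxM (in_alg A)). Qed.

Lemma cst1 n : cst A (1%:M : 'M[F]_n) = 1%:M.
Proof. exact: (map_mx1 (in_alg A)). Qed.

Lemma cstD m n (X Y : 'M[F]_(m,n)) : cst A (X + Y) = cst A X + cst A Y.
Proof. exact: (map_mxD (in_alg A)). Qed.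

Lemma cstN m n (X : 'M[F]_(m,n)) : cst A (- X) = - cst A X.
Proof. exact: (map_mxN (in_alg A)). Qed.

Lemma cst0 m n : cst A (0 : 'M[F]_(m,n)) = 0.
Proof. exact: (map_mx0 (in_alg A)). Qed.

Lemma cstZ m n (c : F) (X : 'M[F]_(m,n)) : cst A (c *: X) = c%:A *: cst A X.
Proof. by apply/matrixP=> i j; rewrite /cst !mxE -scalerAl mul1r scalerA. Qed.

Lemma cst_tr m n (X : 'M[F]_(m,n)) : (cst A X)^T = cst A X^T.
Proof. by rewrite /cst map_trmx. Qed.

Variables (Dx Dt Dinv : A -> A).
Hypotheses (lDx : islin Dx) (lDt : islin Dt) (lDi : islin Dinv).

Lemma act_mulc a b (P : op A a b) p p' (g : 'M[A]_(a,p)) (X : 'M[F]_(p,p')) :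
  act Dx Dt Dinv P (g *m cst A X) = act Dx Dt Dinv P g *m cst A X.
Proof.
elim: P p p' g X => /=.
- by move=> *; rewrite mulmxA.
- by move=> *; rewrite map_mx_mulc.
- by move=> *; rewrite map_mx_mulc.
- by move=> *; rewrite map_mx_mulc.
- by move=> ? ? c P IH *; rewrite IH scalemxAl.
- by move=> ? ? P IHP Q IHQ *; rewrite IHP IHQ mulmxDl.
- by move=> ? ? ? P IHP Q IHQ *; rewrite IHQ IHP.
Qed.

Lemma act_opow a (P : op A a a) j p (g : 'M[A]_(a,p)) :
  act Dx Dt Dinv (opow P j) g = iter j (fun h : 'M[A]_(a,p) => act Dx Dt Dinv P h) g.
Proof. by elim: j => [|j IH] /=; rewrite ?mul1mx // IH. Qed.

Hypothesis hDx_mul : forall f g : A, Dx (f * g) = Dx f * g + f * Dx g.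
Hypothesis hDinv_anti : forall f : A, Dx (Dinv f) = f.
Hypothesis hDinv_base : forall f g : A,
      evx Dx Dinv (f * g) = evx Dx Dinv f * evx Dx Dinv g.

Let ev := evx Dx Dinv.

Lemma Dx1 : Dx 1 = 0.
Proof.
have := hDx_mul 1 1; rewrite !mul1r mulr1 => e.
by apply: (addrI (Dx 1)); rewrite addr0 -e.
Qed.

Lemma Dxc (c : F) : Dx c%:A = 0.
Proof. by rewrite (linZ _ lDx) Dx1 scaler0. Qed.

Lemma lev : islin ev.
Proof.
move=> a x y; rewrite /ev /evx (linD _ lDx) (linZ _ lDx) (linD _ lDi) (linZ _ lDi).
by rewrite scalerBr; rewrite addrACA opprD.
Qed.

Lemma evc (c : F) : ev c%:A = c%:A.
Proof. by rewrite /ev /evx Dxc lin0 // subr0. Qed.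

Lemma evDinv (x : A) : ev (Dinv x) = 0.
Proof. by rewrite /ev /evx hDinv_anti subrr. Qed.

Lemma map_ev_mul m n p (P : 'M[A]_(m,n)) (Q : 'M[A]_(n,p)) :
  map_mx ev (P *m Q) = map_mx ev P *m map_mx ev Q.
Proof.
apply/matrixP=> i j; rewrite !mxE lin_sum; last exact: lev.
by apply: eq_bigr=> k _; rewrite !mxE /ev hDinv_base.
Qed.

Lemma map_ev1 n : map_mx ev (1%:M : 'M[A]_n) = 1%:M.
Proof.
apply/matrixP=> i j; rewrite !mxE; case: (i == j) => /=.
  by rewrite /ev /evx Dx1 lin0 // subr0.
by rewrite lin0 //; exact: lev.
Qed.

Lemma map_Dx_mul m n p (P : 'M[A]_(m,n)) (Q : 'M[A]_(n,p)) :
  map_mx Dx (P *m Q) = map_mx Dx P *m Q + P *m map_mx Dx Q.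
Proof.
apply/matrixP=> i j; rewrite !mxE lin_sum // -big_split /=.
by apply: eq_bigr=> k _; rewrite !mxE hDx_mul.
Qed.

Lemma map_Dx1 n : map_mx Dx (1%:M : 'M[A]_n) = 0.
Proof.
apply/matrixP=> i j; rewrite !mxE; case: (i == j) => /=; first by rewrite Dx1.
by rewrite lin0.
Qed.

Lemma map_DinvDx m n (X : 'M[A]_(m,n)) :
  map_mx Dinv (map_mx Dx X) = X - map_mx ev X.
Proof.
by apply/matrixP=> i j; rewrite !mxE /ev /evx opprB addrC subrK.
Qed.

Lemma map_linN f m n (X : 'M[A]_(m,n)) : islin f -> map_mx f (- X) = - map_mx f X.
Proof. by move=> h; apply/matrixP=> i j; rewrite !mxE linN. Qed.

Lemma map_linD f m n (X Y : 'M[A]_(m,n)) : islin f ->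
  map_mx f (X + Y) = map_mx f X + map_mx f Y.
Proof. by move=> h; apply/matrixP=> i j; rewrite !mxE linD. Qed.

Definition Wf {N K} (phi psi : 'M[A]_(N,K)) (Delta : 'M[A]_K) (g : 'M[A]_(N,K)) :=
  g - phi *m invmx Delta *m map_mx Dinv (psi^T *m g).
Definition Wi {N K} (phi psi : 'M[A]_(N,K)) (Delta : 'M[A]_K) (g : 'M[A]_(N,K)) :=
  g + phi *m map_mx Dinv (invmx Delta *m psi^T *m g).

Lemma lemB N K (phi psi : 'M[A]_(N,K)) (C : 'M[F]_K) :
  C \in unitmx -> cst A C + map_mx Dinv (psi^T *m phi) \in unitmx ->
  let Delta := cst A C + map_mx Dinv (psi^T *m phi) in
  Wf phi psi Delta phi = phi *m invmx Delta *m cst A C /\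
  Wi phi psi Delta (phi *m invmx Delta) = phi *m cst A (invmx C).
Proof.
move=> hC hD Delta.
set G := psi^T *m phi.
have eG : map_mx Dinv G = Delta - cst A C by rewrite /Delta addrC addKr.
split.
  rewrite /Wf -/G eG.
  rewrite mulmxBr -[phi *m (invmx Delta) *m Delta]mulmxA mulVmx // mulmx1 opprB.
  by rewrite addrC subrK.
have dD : map_mx Dx Delta = G.
  apply/matrixP=> i j; rewrite /Delta /cst !mxE (linD _ lDx) Dxc add0r.
  by rewrite hDinv_anti.
have dDi : map_mx Dx (invmx Delta) = - ((invmx Delta) *m G *m (invmx Delta)).
  have := @map_Dx_mul _ _ _ Delta (invmx Delta); rewrite mulmxV // map_Dx1 dD => /eqP.
  rewrite eq_sym addr_eq0 => /eqP e.
  have := congr1 (mulmx (invmx Delta)) e.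
  rewrite mulmxN [in X in _ = - X]mulmxA mulVmx // mul1mx => e2.
  by rewrite -mulmxA e2 opprK.
have eDi : map_mx ev (invmx Delta) = cst A (invmx C).
  have e1 : cst A C *m map_mx ev (invmx Delta) = 1%:M.
    have <- : map_mx ev Delta = cst A C.
      apply/matrixP=> i j; rewrite /Delta /cst !mxE (linD _ lev).
      by rewrite evc evDinv addr0.
    by rewrite -map_ev_mul mulmxV // map_ev1.
  have := congr1 (mulmx (cst A (invmx C))) e1.
  by rewrite mulmxA -cstM mulVmx // cst1 mul1mx mulmx1.
rewrite /Wi.
have -> : invmx Delta *m psi^T *m (phi *m invmx Delta) = - map_mx Dx (invmx Delta).
  by rewrite dDi opprK /G !mulmxA.
rewrite map_linN // map_DinvDx eDi mulmxN mulmxBr opprB addrC subrK.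
done.
Qed.

Lemma actW N K (phi psi : 'M[A]_(N,K)) Delta g :
  act Dx Dt Dinv (Wop phi psi Delta) g = Wf phi psi Delta g.
Proof. by rewrite /= mul1mx /Wf !scaleN1r. Qed.

Lemma actWinv N K (phi psi : 'M[A]_(N,K)) Delta g :
  act Dx Dt Dinv (Winvop phi psi Delta) g = Wi phi psi Delta g.
Proof. by rewrite /= mul1mx /Wi. Qed.

Lemma act_otrWinv N K (phi psi : 'M[A]_(N,K)) Delta g :
  act Dx Dt Dinv (otr (Winvop phi psi Delta)) g = Wf psi phi Delta^T g.
Proof.
rewrite /= trmx1 mul1mx /Wf !scaleN1r mulmxN trmx_mul trmxK trmx_inv.
done.
Qed.

Lemma act_otrW N K (phi psi : 'M[A]_(N,K)) Delta g :
  act Dx Dt Dinv (otr (Wop phi psi Delta)) g = Wi psi phi Delta^T g.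
Proof.
rewrite /= trmx1 mul1mx /Wi !scaleN1r mulmxN opprK trmxK trmx_mul trmx_inv.
done.
Qed.

Lemma keyL N K (fW fWi fL fM fLh fMh : 'M[A]_(N,K) -> 'M[A]_(N,K))
  (phi : 'M[A]_(N,K)) (Lam : 'M[F]_K) (c : F) (l : nat) (X : 'M[F]_K) :
  (forall g Y, fW (g *m cst A Y) = fW g *m cst A Y) ->
  (forall g Y, fL (g *m cst A Y) = fL g *m cst A Y) ->
  (forall g Y, fM (g *m cst A Y) = fM g *m cst A Y) ->
  (forall g Y, fWi (g *m cst A Y) = fWi g *m cst A Y) ->
  (forall g, fLh g = fW (fL (fWi g))) ->
  (forall g, fMh g = fW (fM (fWi g))) ->
  fWi (fW phi) = phi ->
  fM phi = phi *m cst A Lam ->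
  fL phi = - (c%:A *: (phi *m cst A (Lam ^+ l.+1))) ->
  fLh (fW phi *m cst A X) + c%:A *: iter l.+1 fMh (fW phi *m cst A X) = 0.
Proof.
move=> cW cL cM cWi eLh eMh hWi hM hL.
have it : forall j, iter j fMh (fW phi *m cst A X) = fW phi *m cst A (Lam ^+ j *m X).
  elim=> [|j IH] /=; first by rewrite expr0 mul1mx.
  rewrite IH eMh cWi hWi cM hM -mulmxA -cstM cW.
  by rewrite exprS mulmxE mulrA.
rewrite it eLh cWi hWi cL hL cW.
have -> : - (c%:A *: (phi *m cst A (Lam ^+ l.+1))) = phi *m cst A (- (c *: Lam ^+ l.+1)).
  by rewrite cstN cstZ scalemxAr mulmxN.
rewrite cW -mulmxA -cstM scalemxAr -cstZ -mulmxDr -cstD.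
by rewrite mulNmx -scalemxAl addNr cst0 mulmx0.
Qed.

End Aux.
Theorem corollary4
  (* constants field (C in the paper) and algebra of scalar functions of (x, t_n) *)
  (F : fieldType) (A : comUnitAlgType F)
  (* D = d/dx, d/dt_n, and the fixed antiderivative D^{-1} *)
  (Dx Dt Dinv : A -> A)
  (hDx_lin : forall (a : F) (f g : A), Dx (a *: f + g) = a *: Dx f + Dx g)
  (hDx_mul : forall f g : A, Dx (f * g) = Dx f * g + f * Dx g)
  (hDt_lin : forall (a : F) (f g : A), Dt (a *: f + g) = a *: Dt f + Dt g)
  (hDt_mul : forall f g : A, Dt (f * g) = Dt f * g + f * Dt g)
  (hDxDt : forall f : A, Dx (Dt f) = Dt (Dx f))
  (hDinv_lin : forall (a : F) (f g : A), Dinv (a *: f + g) = a *: Dinv f + Dinv g)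
  (hDinv_anti : forall f : A, Dx (Dinv f) = f)
  (hDinv_Dt : forall f : A, Dt (Dinv f) = Dinv (Dt f))
  (hDinv_base : forall f g : A,
      evx Dx Dinv (f * g) = evx Dx Dinv f * evx Dx Dinv g)
  (* data *)
  (N K m k n l : nat) (hk : (0 < k)%N) (hn : (0 < n)%N)
  (c alpha : F) (J Jt : 'M[F]_N) (hJ : J *m Jt = Jt *m J)
  (u v : nat -> 'M[A]_N) (q r : 'M[A]_(N, m)) (M0 : 'M[F]_m)
  (phi psi : 'M[A]_(N, K)) (Lam Lamt : 'M[F]_K) (C : 'M[F]_K)
  (hC : C \in unitmx)
  (hDelta : cst A C + map_mx Dinv (psi^T *m phi) \in unitmx) :
  let Mn := Mop n alpha Jt v q r M0 in
  let L := Lop Dx Dt Dinv k l c J u q r M0 Mn in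
  let Delta := cst A C + map_mx Dinv (psi^T *m phi) in
  let W := Wop phi psi Delta in
  let Winv := Winvop phi psi Delta in
  let Lhat := OComp W (OComp L Winv) in
  let Mhat := OComp W (OComp Mn Winv) in
  let Phi := phi *m invmx Delta in
  let Psi := psi *m (invmx Delta)^T in
  act Dx Dt Dinv Mn phi = phi *m cst A Lam ->
  act Dx Dt Dinv (otr Mn) psi = psi *m cst A Lamt ->
  act Dx Dt Dinv L phi = - (c%:A *: (phi *m cst A (Lam ^+ l.+1))) ->
  act Dx Dt Dinv (otr L) psi = - (c%:A *: (psi *m cst A (Lamt ^+ l.+1))) ->
  [/\ Phi = act Dx Dt Dinv W phi *m cst A (invmx C),
      Psi = act Dx Dt Dinv (otr Winv) psi *m cst A (invmx C^T),
      act Dx Dt Dinv Lhat Phi + c%:A *: act Dx Dt Dinv (opow Mhat l.+1) Phi = 0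
    & act Dx Dt Dinv (otr Lhat) Psi
        + c%:A *: act Dx Dt Dinv (opow (otr Mhat) l.+1) Psi = 0].
Proof.
move=> Mn L Delta W Winv Lhat Mhat Phi Psi hM hMt hL hLt.
have lDx : islin _ A Dx := hDx_lin.
have lDt : islin _ A Dt := hDt_lin.
have lDi : islin _ A Dinv := hDinv_lin.
have am := @act_mulc _ _ Dx Dt Dinv lDx lDt lDi.
have [B1 B2] := @lemB _ _ Dx Dinv lDx lDi hDx_mul hDinv_anti hDinv_base _ _ phi psi C hC hDelta.
have eDT : Delta^T = cst A C^T + map_mx Dinv (phi^T *m psi).
  by rewrite /Delta linearD /= cst_tr map_trmx trmx_mul trmxK.
have hCT : C^T \in unitmx by rewrite unitmx_tr.
have hDT : Delta^T \in unitmx by rewrite unitmx_tr.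
have := @lemB _ _ Dx Dinv lDx lDi hDx_mul hDinv_anti hDinv_base _ _ psi phi C^T hCT; rewrite -eDT => /(_ hDT) [B3 B4].
have P1 : Phi = act Dx Dt Dinv W phi *m cst A (invmx C).
  by rewrite actW B1 -mulmxA -cstM mulmxV // cst1 mulmx1.
have P2 : Psi = act Dx Dt Dinv (otr Winv) psi *m cst A (invmx C^T).
  by rewrite act_otrWinv B3 -mulmxA -cstM mulmxV // cst1 mulmx1 /Psi trmx_inv.
split => //.
- rewrite act_opow P1.
  refine (@keyL _ _ _ _ (@act _ _ Dx Dt Dinv _ _ W K) (@act _ _ Dx Dt Dinv _ _ Winv K)
    (@act _ _ Dx Dt Dinv _ _ L K) (@act _ _ Dx Dt Dinv _ _ Mn K) (@act _ _ Dx Dt Dinv _ _ Lhat K) (@act _ _ Dx Dt Dinv _ _ Mhat K) phi Lam c l (invmx C) _ _ _ _ _ _ _ _ _) => //.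
  by rewrite actW B1 am actWinv B2 -mulmxA -cstM mulVmx // cst1 mulmx1.
- rewrite act_opow P2; refine (@keyL _ _ _ _ (@act _ _ Dx Dt Dinv _ _ (otr Winv) K)
    (@act _ _ Dx Dt Dinv _ _ (otr W) K)
    (@act _ _ Dx Dt Dinv _ _ (otr L) K) (@act _ _ Dx Dt Dinv _ _ (otr Mn) K) (@act _ _ Dx Dt Dinv _ _ (otr Lhat) K) (@act _ _ Dx Dt Dinv _ _ (otr Mhat) K) psi Lamt c l (invmx C^T) _ _ _ _ _ _ _ _ _) => //.
  by rewrite act_otrWinv B3 am act_otrW B4 -mulmxA -cstM mulVmx // cst1 mulmx1.
Qed.
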